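(* Let $\mathbb{L}/\mathbb{K}$ be a finite Galois extension of degree $N$ whose Galois group $G$ is abelian, let $\mathcal{C}\subseteq\mathbb{L}[G]$ be an $\mathbb{L}$-linear subspace, and let $\mathcal{B}$ be an ordered $\mathbb{K}$-basis of $\mathbb{L}$ with trace-dual basis $\mathcal{B}^*$. Then $\mathcal{C}^\perp(\mathcal{B})=\big(\mathcal{C}(\mathcal{B}^* )\big)^\perp$, where on the left $\perp$ is taken in $\mathbb{L}[G]$ with respect to $\langle\cdot,\cdot\rangle_{\mathbb{L}[G]}$ and on the right in $\mathbb{L}^N$ with respect to the standard inner product $\mathbf{u}\cdot\mathbf{v}^\top$.
   Context: Elements $a=\sum_g a_g g\in\mathbb{L}[G]$ act on $\mathbb{L}$ by $x\mapsto\sum_g a_gg(x)$. For $\mathbf{b}=(b_1,\dots,b_N)\in\mathbb{L}^N$, $\mathrm{ev}_\mathbf{b}(a)=(a(b_1),\dots,a(b_N))$, and for $\mathcal{C}\subseteq\mathbb{L}[G]$, $\mathcal{C}(\mathbf{b})=\{\mathrm{ev}_\mathbf{b}(c):c\in\mathcal{C}\}$. The bilinear form on $\mathbb{L}[G]$ is $\langle\sum_ga_gg,\sum_gb_gg\rangle_{\mathbb{L}[G]}=\sum_g a_gb_g$, and $\mathcal{C}^\perp=\{a\in\mathbb{L}[G]:\langle a,b\rangle_{\mathbb{L}[G]}=0\ \forall b\in\mathcal{C}\}$. The trace-dual basis $\mathcal{B}^*=(b_1^*,\dots,b_N^* )$ satisfies $\mathrm{Tr}_{\mathbb{L}/\mathbb{K}}(b_ib_j^*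 )=\delta_{i,j}$ with $\mathrm{Tr}_{\mathbb{L}/\mathbb{K}}(x)=\sum_{g\in G}g(x)$. *)

(* Defs.v *)
From HB Require Import structures.
From mathcomp Require Import all_boot all_order all_algebra all_fingroup all_field.
Set Implicit Arguments. Unset Strict Implicit. Unset Printing Implicit Defensive.
Import GRing.Theory.
Local Open Scope ring_scope.

(* Elements of the group algebra L[G] are modelled as finite functions
   a : {ffun gal_of {:L} -> L} with a g = 0 for g outside G
   (a = sum_{g in G} a g * g). *)

Section Defs.
Variables (F : fieldType) (L : splittingFieldType F) (K : {subfield L}).

Definition grpalg := {ffun gal_of {:L} -> L}.

Definition inLG (a : grpalg) : Prop :=
  forall g : gal_of {:L}, g \notin 'Gal({:L} / K)%g -> a g = 0.

Definition gaction (a : grpalg) (x : L) : L :=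
  \sum_(g in 'Gal({:L} / K)%g) a g * g x.

Definition evb (N : nat) (b : 'I_N -> L) (a : grpalg) : 'rV[L]_N :=
  \row_i gaction a (b i).

Definition LGform (a c : grpalg) : L :=
  \sum_(g in 'Gal({:L} / K)%g) a g * c g.

Definition LG_subspace (C : grpalg -> Prop) : Prop :=
  (forall a, C a -> inLG a) /\
  C [ffun => 0] /\
  (forall (l : L) a c, C a -> C c -> C [ffun g => l * a g + c g]).

Definition LGperp (C : grpalg -> Prop) (a : grpalg) : Prop :=
  inLG a /\ forall c, C c -> LGform a c = 0.

Definition evset (N : nat) (b : 'I_N -> L) (C : grpalg -> Prop)
    (v : 'rV[L]_N) : Prop :=
  exists c, C c /\ v = evb b c.

Definition is_K_basis (N : nat) (b : 'I_N -> L) : Prop :=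
  (forall x : L, exists c : 'I_N -> L,
      (forall i, c i \in K) /\ x = \sum_i c i * b i) /\
  (forall c : 'I_N -> L, (forall i, c i \in K) ->
      \sum_i c i * b i = 0 -> forall i, c i = 0).

Definition trace_dual (N : nat) (b bs : 'I_N -> L) : Prop :=
  forall i j, galTrace K {:L} (b i * bs j) = (i == j)%:R.

Definition dotL (N : nat) (u v : 'rV[L]_N) : L := \sum_i u 0 i * v 0 i.

Definition vecperp (N : nat) (V : 'rV[L]_N -> Prop) (u : 'rV[L]_N) : Prop :=
  forall v, V v -> dotL u v = 0.

End Defs.

(* Main.v *)
Require Import Defs.
From mathcomp Require Import all_boot all_order all_algebra all_fingroup all_field.
Local Open Scope ring_scope.
Import GRing.Theory.

Theorem mainTheorem10 (F : fieldType) (L : splittingFieldType F)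
  (K : {subfield L}) (N : nat) (B Bs : 'I_N -> L)
  (C : grpalg L -> Prop) :
  galois K {:L} ->
  abelian 'Gal({:L} / K)%g ->
  \dim_K {:L} = N ->
  LG_subspace K C ->
  is_K_basis K B ->
  trace_dual K B Bs ->
  forall u : 'rV[L]_N,
    evset K B (LGperp K C) u <-> vecperp (evset K Bs C) u.
Proof.
move=> galKL _ hdim _ _ hdual.
rewrite galois_dim // in hdim; subst N.
set G := 'Gal({:L} / K)%g.
pose e := @enum_val _ (mem G).
pose P : 'M[L]_#|G| := \matrix_(k, i) (e k) (B i).
pose Q : 'M[L]_#|G| := \matrix_(k, i) (e k) (Bs i).
have PQ : P^T *m Q = 1%:M.
  apply/matrixP => i j; rewrite !mxE -hdual /galTrace (big_enum_val (fun x : gal_of {:L} => x (B i * Bs j))).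
  by apply: eq_bigr => k _; rewrite !mxE rmorphM.
have QP : P *m Q^T = 1%:M.
  by rewrite -[P]trmxK -trmx_mul mulmx1C // trmx1.
pose al (a : grpalg L) : 'rV[L]_#|G| := \row_k a (e k).
have evE b a : evb K b a = al a *m \matrix_(k, i) (e k) (b i).
  apply/rowP => i; rewrite !mxE /gaction (big_enum_val (fun g : gal_of {:L} => a g * g (b i))).
  by apply: eq_bigr => k _; rewrite !mxE.
have dotE x y : dotL x y = (x *m y^T) 0 0.
  by rewrite !mxE; apply: eq_bigr => i _; rewrite !mxE.
have formE a c : LGform K a c = (al a *m (al c)^T) 0 0.
  rewrite /LGform (big_enum_val (fun g : gal_of {:L} => a g * c g)) !mxE.
  by apply: eq_bigr => k _; rewrite !mxE.
have key a c : dotL (evb K B a) (evb K Bs c) = LGform K a c.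
  by rewrite dotE formE !evE trmx_mul mulmxA -(mulmxA _ P) QP mulmx1.
move=> u; split.
  move=> [a [[_ ha] ->]] v [c [Cc ->]].
  by rewrite key ha.
move=> hu.
pose a : grpalg L := [ffun g => if g \in G then \sum_i u 0 i * g (Bs i) else 0].
have ala : al a = u *m Q^T.
  apply/rowP => k; rewrite !mxE ffunE enum_valP.
  by apply: eq_bigr => i _; rewrite !mxE.
have eva : evb K B a = u.
  by rewrite evE ala -mulmxA -[Q^T *m _]trmxK trmx_mul trmxK PQ trmx1 mulmx1.
exists a; split; last by rewrite eva.
split.
  by move=> g /negbTE gG; rewrite ffunE gG.
move=> c Cc; rewrite -key eva; apply: hu; by exists c.
Qed.
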